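(* Every voting rule in the PJR-Exact family satisfies PJR: for every ballot profile $\mathcal{A}=(A_1,\dots,A_n)$ over a candidate set $C$ and every committee size $k\le |C|$, every committee $W$ that can be produced by a rule of the PJR-Exact family provides PJR for $(\mathcal{A},k)$.
   Context: Setting: voters $N=\{1,\dots,n\}$, candidates $C=\{c_1,\dots,c_m\}$, each voter $i$ submits an approval ballot $A_i\subseteq C$; $\mathcal{A}=(A_1,\dots,A_n)$; $k$ is a positive integer with $k\le |C|$. The exact quota is $q=n/k$. For $c\in C$, $N_c=\{i\in N: c\in A_i\}$. EJR/PJR: for $\ell\in\{1,\dots,k\}$, a set $N^*\subseteq N$ is $\ell$-cohesive if $|N^*|\ge \ell n/k$ and $|\bigcap_{i\in N^*}A_i|\ge \ell$. A committee $W\subseteq C$ with $|W|=k$ provides EJR (resp. PJR) for $(\mathcal{A},k)$ if for every $\ell\in\{1,\dots,k\}$ and every $\ell$-cohesive $N^*$ there is $i\in N^*$ with $|A_i\cap W|\ge \ell$ (resp. $|W\cap\bigcup_{i\in N^*}A_i|\ge \ell$). PJR-Exact family: a rule in this family is any iterative procedure that selects candidates $w_1,\dots,w_k$ one at a time, with $W_0=\emptyset$, $W_j=W_{j-1}\cup\{w_j\}$, $w_j\in C\setminus W_{j-1}$, output $W=W_k$, and maintains vote fractions $f_i^j$ ($i\in N$, $j=0,\dots,k$) with $f_i^0=1$, $0\le f_i^j\le f_i^{j-1}$, such that at every iteration $j$: (a) $f_i^j=f_i^{j-1}$ for $i\notin N_{w_j}$; (b) letting $s=\sum_{i\in N_{w_j}}f_i^{j-1}$,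 if $s>q$ then $\sum_{i\in N_{w_j}}(f_i^{j-1}-f_i^j)=q$, and if $s\le q$ then $f_i^j=0$ for all $i\in N_{w_j}$; (c) if some $c\in C\setminus W_{j-1}$ satisfies $\sum_{i\in N_c}f_i^{j-1}\ge q$, then $\sum_{i\in N_{w_j}}f_i^{j-1}\ge q$. All choices not constrained by (a)–(c) are arbitrary. *)

(* Defs.v *)
From HB Require Import structures.
From mathcomp Require Import all_boot all_order all_algebra.
Set Implicit Arguments. Unset Strict Implicit. Unset Printing Implicit Defensive.
Import Order.TTheory GRing.Theory Num.Theory.
Local Open Scope ring_scope.

Definition quota (R : realFieldType) (n k : nat) : R := n%:R / k%:R.

Definition supp_sum (R : realFieldType) (C : finType) (n : nat)
  (A : 'I_n -> {set C}) (c : C) (g : 'I_n -> R) : R :=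
  \sum_(i < n | c \in A i) g i.

(* The set W_j = {w_1,...,w_j} of the first j selected candidates
   (here w is 0-indexed: w t for t < j). *)
Definition prefix_set (C : finType) (k : nat) (w : 'I_k -> C) (j : nat) : {set C} :=
  [set w t | t : 'I_k & (t < j)%N].

(* A run of a rule in the PJR-Exact family: candidates w (injective,
   w t is the candidate chosen at iteration t+1) and vote fractions
   f j i = f_i^j for j = 0..k. *)
Definition pjr_exact_run (R : realFieldType) (C : finType) (n k : nat)
  (A : 'I_n -> {set C}) (w : 'I_k -> C) (f : nat -> 'I_n -> R) : Prop :=
  injective w /\
  (forall i, f 0%N i = 1) /\
  forall t : 'I_k,
    let j := nat_of_ord t in
    let wj := w t in
    let s := supp_sum A wj (f j) in
    (forall i, 0 <= f j.+1 i /\ f j.+1 i <= f j i) /\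
    (forall i, wj \notin A i -> f j.+1 i = f j i) /\
    (quota R n k < s ->
       \sum_(i < n | wj \in A i) (f j i - f j.+1 i) = quota R n k) /\
    (s <= quota R n k -> forall i, wj \in A i -> f j.+1 i = 0) /\
    ((exists c, c \notin prefix_set w j /\ quota R n k <= supp_sum A c (f j)) ->
       quota R n k <= s).

Definition provides_PJR (C : finType) (n : nat) (A : 'I_n -> {set C}) (k : nat)
  (W : {set C}) : Prop :=
  #|W| = k /\
  forall (l : nat) (Ns : {set 'I_n}),
    (1 <= l <= k)%N ->
    ((l * n)%:R / k%:R <= (#|Ns|%:R : rat)) ->
    (l <= #|\bigcap_(i in Ns) A i|)%N ->
    (l <= #|W :&: \bigcup_(i in Ns) A i|)%N.

(* Main.v *)
Require Import Defs.
From HB Require Import structures.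
From mathcomp Require Import all_boot all_order all_algebra.
From mathcomp Require Import lra.
Import Order.TTheory GRing.Theory Num.Theory.
Local Open Scope ring_scope.

Theorem mainTheorem1 (R : realFieldType) (C : finType) (n k : nat)
  (A : 'I_n -> {set C}) (w : 'I_k -> C) (f : nat -> 'I_n -> R) :
  (0 < n)%N -> (0 < k)%N -> (k <= #|C|)%N ->
  pjr_exact_run A w f ->
  provides_PJR A k [set w t | t : 'I_k].
Proof.
move=> n0 k0 _ [winj [f0 step]].
split; first by rewrite card_imset // card_ord.
move=> l Ns /andP[l1 lk] hNs hcap.
rewrite leqNgt; apply/negP => hlt.
set W := [set w t | t : 'I_k] in hlt *.
set U := \bigcup_(i in Ns) A i in hlt *.
set q := quota R n k.
have q0 : 0 < q by rewrite /q /quota divr_gt0 // ltr0n.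
have hN : (l * n <= #|Ns| * k)%N.
  by move: hNs; rewrite ler_pdivrMr ?ltr0n // -natrM ler_nat.
have hq : l%:R * q <= #|Ns|%:R :> R.
  by rewrite /q /quota mulrA ler_pdivrMr ?ltr0n // -!natrM ler_nat.
have fnn : forall j i, (j <= k)%N -> 0 <= f j i.
  case=> [|j] i hj; first by rewrite f0.
  have hjk : (j < k)%N := hj.
  have [hnn _] := step (Ordinal hjk).
  by case: (hnn i).
have rem : forall j (hj : (j < k)%N),
    \sum_(i | w (Ordinal hj) \in A i) (f j i - f j.+1 i) <= q.
  move=> j hj.
  have [_ [_ [hgt [hle _]]]] := step (Ordinal hj).
  move: hgt hle => /=.
  set s := supp_sum _ _ _ => hgt hle.
  case: (ltrP q s) => hs; first by rewrite hgt.
  rewrite (eq_bigr (fun i => f j i)); first exact: hs.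
  by move=> i hi; rewrite (hle hs i hi) subr0.
have remNs : forall j (hj : (j < k)%N),
    \sum_(i in Ns) f j i - \sum_(i in Ns) f j.+1 i <= q.
  move=> j hj; rewrite -sumrB; apply: le_trans (rem j hj).
  have [hnn [hnot _]] := step (Ordinal hj).
  rewrite [X in X <= _]big_mkcond [X in _ <= X]big_mkcond /=.
  apply: ler_sum => i _.
  case: (boolP (w (Ordinal hj) \in A i)) => h; case: (i \in Ns) => //=.
  - by case: (hnn i) => _ ?; rewrite subr_ge0.
  - by rewrite (hnot i h) subrr.
set cnt := fun j => #|[set t : 'I_k | (t < j)%N & w t \in U]|.
have cntle : forall j, (cnt j < l)%N.
  move=> j; rewrite /cnt -(card_imset _ winj).
  apply: leq_ltn_trans hlt; apply: subset_leq_card; apply/subsetP => x.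
  move=> /imsetP [t]; rewrite inE => /andP[_ ht] ->.
  by rewrite inE ht andbT; apply/imsetP; exists t.
have inv : forall j, (j <= k)%N ->
    #|Ns|%:R - q * (cnt j)%:R <= \sum_(i in Ns) f j i.
  elim=> [|j IH] hj.
    have -> : cnt 0%N = 0%N.
      by apply/eqP; rewrite cards_eq0; apply/eqP/setP => x; rewrite !inE.
    by rewrite mulr0 subr0 (eq_bigr (fun _ => 1)) ?sumr_const // => i _; rewrite f0.
  have hjk : (j < k)%N := hj.
  have IH' := IH (ltnW hjk).
  have hr := remNs j hjk.
  have [_ [hnot _]] := step (Ordinal hjk).
  case: (boolP (w (Ordinal hjk) \in U)) => hU.
    have -> : cnt j.+1 = (cnt j).+1.
      rewrite /cnt -add1n.
      have -> : [set t : 'I_k | (t < j.+1)%N & w t \in U] =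
                Ordinal hjk |: [set t : 'I_k | (t < j)%N & w t \in U].
        apply/setP => x; rewrite !inE ltnS leq_eqVlt.
        case: (boolP (x == Ordinal hjk)) => hx.
          by rewrite (eqP hx) /= eqxx hU.
        have hx' : (nat_of_ord x == j) = false.
          by apply/negbTE; apply: contra hx => /eqP e; apply/eqP/val_inj.
        by rewrite hx'.
      by rewrite cardsU1 inE /= ltnn.
    rewrite -addn1 natrD; lra.
  have -> : cnt j.+1 = cnt j.
    rewrite /cnt; apply: eq_card => x; rewrite !inE ltnS leq_eqVlt.
    case: (boolP (x == Ordinal hjk)) => hx.
      by rewrite (eqP hx) /= eqxx ltnn (negbTE hU).
    have hx' : (nat_of_ord x == j) = false.
      by apply/negbTE; apply: contra hx => /eqP e; apply/eqP/val_inj.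
    by rewrite hx'.
  rewrite (eq_bigr (f j)) // => i hi; apply: hnot.
  by apply: contra hU => h; apply/bigcupP; exists i.
have lowNs : forall j, (j <= k)%N -> q <= \sum_(i in Ns) f j i.
  move=> j hj; apply: le_trans (inv j hj).
  have hc : ((cnt j) + 1 <= l)%N by rewrite addn1; exact: cntle.
  have hc' : (cnt j)%:R + 1 <= l%:R :> R by rewrite -(ler_nat R) natrD in hc.
  have : q * (cnt j)%:R <= q * (l%:R - 1).
    rewrite ler_wpM2l; [lra | exact: ltW q0 | lra].
  lra.
have [i0 Hi0] : exists i0, i0 \in Ns.
  apply/set0Pn; rewrite -card_gt0 -(ltr_nat R).
  have := lowNs 0%N isT.
  have -> : \sum_(i in Ns) f 0%N i = #|Ns|%:R.
    by rewrite (eq_bigr (fun _ => 1)) ?sumr_const // => i _; rewrite f0.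
  lra.
have [c cI cW] : exists2 c, c \in \bigcap_(i in Ns) A i & c \notin W.
  case: (boolP (\bigcap_(i in Ns) A i \subset W)) => hsub; last first.
    by move/subsetPn: hsub => [c h1 h2]; exists c.
  exfalso.
  have : (#|\bigcap_(i in Ns) A i| <= #|W :&: U|)%N.
    apply: subset_leq_card; apply/subsetP => x hx.
    rewrite inE (subsetP hsub x hx) /=; apply/bigcupP; exists i0 => //.
    by move/bigcapP: hx; apply.
  move=> h; have := leq_trans hcap h; by rewrite leqNgt hlt.
have dsum : forall j (hj : (j < k)%N),
    \sum_(i | w (Ordinal hj) \in A i) (f j i - f j.+1 i) = q.
  move=> j hj.
  have [_ [_ [hgt [hle he]]]] := step (Ordinal hj).
  move: hgt hle he => /=.
  set s := supp_sum _ _ _ => hgt hle he.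
  have hs : q <= s.
    apply: he; exists c; split.
      apply: contra cW => /imsetP [t _ ->]; by apply/imsetP; exists t.
    apply: le_trans (lowNs j (ltnW hj)) _.
    rewrite /supp_sum [X in X <= _]big_mkcond [X in _ <= X]big_mkcond /=.
    apply: ler_sum => i _.
    case: (boolP (i \in Ns)) => hi.
      by move/bigcapP: cI => /(_ i hi) ->.
    by case: (c \in A i) => //; apply: fnn; exact: ltnW.
  case: (ltrP q s) => hs'; first by rewrite hgt.
  rewrite (eq_bigr (fun i => f j i)).
    by apply/eqP; rewrite eq_le hs hs'.
  by move=> i hi; rewrite (hle hs' i hi) subr0.
have tot : forall j, (j <= k)%N -> \sum_i f j i = n%:R - q * j%:R.
  elim=> [|j IH] hj.
    by rewrite mulr0 subr0 (eq_bigr (fun _ => 1)) ?sumr_const ?card_ord // => i _; rewrite f0.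
  have hjk : (j < k)%N := hj.
  have IH' := IH (ltnW hjk).
  have hd := dsum j hjk.
  have [_ [hnot _]] := step (Ordinal hjk).
  have : \sum_i f j i - \sum_i f j.+1 i = q.
    rewrite -sumrB -hd [in RHS]big_mkcond /=; apply: eq_bigr => i _.
    case: (boolP (w (Ordinal hjk) \in A i)) => // h.
    by rewrite (hnot i h) subrr.
  rewrite -addn1 natrD; lra.
have hk := tot k (leqnn k).
have hqk : q * k%:R = n%:R.
  by rewrite /q /quota divfK // pnatr_eq0 -lt0n.
have : \sum_(i in Ns) f k i <= \sum_i f k i.
  rewrite [X in X <= _]big_mkcond /=; apply: ler_sum => i _.
  by case: (i \in Ns) => //; apply: fnn.
have := lowNs k (leqnn k).
lra.
Qed.
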